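(* Let $\vec{G}$ be a DDMOG on $n$ vertices with $imb(\vec{G})=0$, with a DDM labeling $g$, and index its vertices $v_1,\dots,v_n$ so that $g(v_i)=i$. Let $\vec{H}$ be an oriented graph on $m$ vertices, vertex-disjoint from $\vec{G}$, with a bijective labeling $h:V(\vec{H})\to\{1,2,\dots,m\}$ such that every vertex $v\in V(\vec{H})$ satisfies either $m+1\le|wt_h(v)|\le m+n$ or $wt_h(v)=0$, and such that $\sum_{v\in V_h^{i+m}(\vec{H})}h(v)=\sum_{v\in V_h^{-i-m}(\vec{H})}h(v)$ for each $1\le i\le n$. Then the weighted sum $\vec{G}\oplus_{wt_h}^m\vec{H}$ is a DDMOG on $n+m$ vertices.
   Context: An oriented graph is a finite digraph without loops such that whenever $(u,v)$ is an arc, $(v,u)$ is not. For a vertex $v$, $N^+(v)=\{x:(x,v)\text{ is an arc}\}$, $N^-(v)=\{x:(v,x)\text{ is an arc}\}$, $imb(v)=|N^+(v)|-|N^-(v)|$ and $imb(\vec{G})=\max_v|imb(v)|$. For a labeling $f$, $wt_f(v)=\sum_{x\in N^+(v)}f(x)-\sum_{x\in N^-(v)}f(x)$. A DDM labeling of an oriented graph on $n$ vertices is a bijection $f:V\to\{1,\dots,n\}$ with $wt_f(v)=0$ for all $v$; a DDMOG is an oriented graph admitting one. For an oriented graph $\vec{H}$ with labeling $h$ and integer $j$, $V_h^{j}(\vec{H})=\{u:wt_h(u)=j\}$. Weighted sum: let $\vec{G}$ have vertices $v_1,\dots,v_n$ (indexed by a labeling $g$ with $g(v_i)=i$), $s\in\mathbb{Z}$,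 and $\vec{H}$ (vertex-disjoint from $\vec{G}$) have a labeling $h:V(\vec{H})\to\mathbb{Z}^+$ with $\{|wt_h(u)|:u\in V(\vec{H})\}\subseteq\{0\}\cup\{i+s:1\le i\le n\}$; then $\vec{G}\oplus_{wt_h}^s\vec{H}$ has vertex set $V(\vec{G})\cup V(\vec{H})$ and arc set $E(\vec{G})\cup E(\vec{H})\cup\bigcup_{i=1}^n(E^i\cup E^{-i})$, where $E^i=\{(v_i,u):u\in V_h^{-i-s}(\vec{H})\}$ and $E^{-i}=\{(u,v_i):u\in V_h^{i+s}(\vec{H})\}$. *)

(* Defs.v *)
From mathcomp Require Import all_boot all_order all_algebra.
Set Implicit Arguments. Unset Strict Implicit. Unset Printing Implicit Defensive.
Import Order.TTheory GRing.Theory Num.Theory.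
Local Open Scope ring_scope.

Definition oriented (V : finType) (E : rel V) : Prop :=
  (forall v, ~~ E v v) /\ (forall u v, E u v -> ~~ E v u).

Definition Nplus (V : finType) (E : rel V) (v : V) : {set V} := [set x | E x v].
Definition Nminus (V : finType) (E : rel V) (v : V) : {set V} := [set x | E v x].

Definition imb (V : finType) (E : rel V) (v : V) : int :=
  (#|Nplus E v|%:Z - #|Nminus E v|%:Z).

Definition wt (V : finType) (E : rel V) (f : V -> nat) (v : V) : int :=
  (\sum_(x in Nplus E v) (f x)%:Z) - (\sum_(x in Nminus E v) (f x)%:Z).

Definition bij_labeling (V : finType) (f : V -> nat) : Prop :=
  injective f /\ (forall v, (0 < f v <= #|V|)%N).

Definition DDM_labeling (V : finType) (E : rel V) (f : V -> nat) : Prop :=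
  bij_labeling f /\ (forall v, wt E f v = 0).

Definition DDMOG (V : finType) (E : rel V) : Prop :=
  oriented E /\ exists f : V -> nat, DDM_labeling E f.

(* Weighted sum G (+)^s_{wt_h} H on vertex set VG + VH (disjoint union);
   vertex x of G plays the role of v_i with i = g x.
   E^i  = {(v_i,u) : wt_h u = -i-s},  E^{-i} = {(u,v_i) : wt_h u = i+s}. *)
Definition wsum (VG VH : finType) (EG : rel VG) (EH : rel VH)
  (g : VG -> nat) (h : VH -> nat) (s : int) : rel (VG + VH) :=
  fun a b =>
    match a, b with
    | inl x, inl y => EG x y
    | inr u, inr w => EH u w
    | inl x, inr u => wt EH h u == - ((g x)%:Z + s)
    | inr u, inl x => wt EH h u == (g x)%:Z + s
    end.

(* Main.v *)
Require Import Defs.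
From mathcomp Require Import all_boot all_order all_algebra.
From mathcomp Require Import zify.
Import Order.TTheory GRing.Theory Num.Theory.
Local Open Scope ring_scope.

Lemma surjg (VG : finType) (g : VG -> nat) n : #|VG| = n -> bij_labeling g ->
  forall k, (0 < k <= n)%N -> exists x, g x = k.
Proof.
move=> Hc [Hi Hr] k Hk.
case: n Hc Hk => [|n'] Hc Hk; first by lia.
pose gg := fun x => (inord (g x).-1 : 'I_n'.+1).
have ginj : injective gg.
  move=> x y /(congr1 (@nat_of_ord _)); rewrite /gg !inordK; last 2 first.
  - by have := Hr y; rewrite Hc; lia.
  - by have := Hr x; rewrite Hc; lia.
  move=> e; apply: Hi; have := Hr x; have := Hr y; lia.
have := @inj_card_onto _ _ gg ginj.
rewrite Hc card_ord => /(_ (leqnn _) (inord k.-1)) /codomP [x Hx].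
exists x; move/(congr1 (@nat_of_ord _)): Hx; rewrite /gg !inordK.
all: by have := Hr x; rewrite ?Hc; lia.
Qed.

Lemma wt_sum (A B : finType) (E : rel (A + B)) (f : A + B -> nat) v :
  wt E f v = (\sum_(y | E (inl y) v) (f (inl y))%:Z + \sum_(y | E (inr y) v) (f (inr y))%:Z)
    - (\sum_(y | E v (inl y)) (f (inl y))%:Z + \sum_(y | E v (inr y)) (f (inr y))%:Z).
Proof.
rewrite /wt /Nplus /Nminus !big_sumType /=.
by congr (_ + _ - (_ + _)); apply: eq_bigl => y; rewrite inE.
Qed.

Lemma sum_natz (I : finType) (P : pred I) (F : I -> nat) :
  ((\sum_(i | P i) F i)%N)%:Z = \sum_(i | P i) (F i)%:Z.
Proof. by rewrite -natz natr_sum; apply: eq_bigr => i _; rewrite natz. Qed.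

Theorem theorem7 (VG VH : finType) (EG : rel VG) (EH : rel VH)
  (g : VG -> nat) (h : VH -> nat) (n m : nat) :
  #|VG| = n -> #|VH| = m ->
  oriented EG -> DDM_labeling EG g -> (forall v, imb EG v = 0) ->
  oriented EH -> bij_labeling h ->
  (forall v, (m.+1 <= `|wt EH h v|%N <= m + n)%N \/ wt EH h v = 0) ->
  (forall i : nat, (1 <= i <= n)%N ->
     (\sum_(v | wt EH h v == (i + m)%:Z) h v)%N
     = (\sum_(v | wt EH h v == - (i + m)%:Z) h v)%N) ->
  DDMOG (wsum EG EH g h m%:Z) /\ #|{: VG + VH}| = (n + m)%N.
Proof.
move=> HG HH [oG1 oG2] [[gi gr] gw] gimb [oH1 oH2] [hi hr] hw hsum.
have Hcard : #|{: VG + VH}| = (n + m)%N by rewrite card_sum HG HH.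
split=> //; split.
  split.
  - by case=> x /=; rewrite /wsum ?oG1 ?oH1.
  - case=> [x|u] [y|w]; rewrite /wsum.
    + exact: oG2.
    + have := gr x; move=> ? /eqP -> ; apply/negP => /eqP; lia.
    + have := gr y; move=> ? /eqP -> ; apply/negP => /eqP; lia.
    + exact: oH2.
pose f := fun a : VG + VH => match a with inl x => (g x + m)%N | inr u => h u end.
exists f; split.
  split.
  - case=> [x|u] [y|w] /=.
    + by move=> e; congr inl; apply: gi; lia.
    + by have := gr x; have := hr w; rewrite HH; lia.
    + by have := gr y; have := hr u; rewrite HH; lia.
    + by move=> e; congr inr; apply: hi.
  - case=> [x|u]; rewrite Hcard /=.
    + by have := gr x; rewrite HG; lia.
    + by have := hr u; rewrite HH; lia.
case=> [x|u]; rewrite wt_sum /wsum /f.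
- have hG : forall P : pred VG, \sum_(y | P y) ((g y + m)%N)%:Z
      = \sum_(y in [set y | P y]) (g y)%:Z + (m * #|[set y | P y]|)%N%:Z.
    move=> P; under eq_bigr do rewrite PoszD.
    rewrite big_split /= sumr_const -mulr_natr natz PoszM.
    congr (_ + _).
    by apply: eq_bigl => y; rewrite inE.
    by congr (_ * _)%N; apply: eq_card => y; rewrite inE.
  rewrite !hG.
  have w1 := gw x; have i1 := gimb x; rewrite /imb /Nplus /Nminus in i1.
  rewrite /wt /Nplus /Nminus in w1.
  have hx := gr x; rewrite HG in hx.
  have := hsum (g x) hx; rewrite PoszD.
  move/(congr1 (fun k : nat => k%:Z)); rewrite !sum_natz => s1.
  rewrite s1 !PoszM; lia.
- have wu : \sum_(y | EH y u) (h y)%:Z - \sum_(y | EH u y) (h y)%:Z = wt EH h u.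
    by rewrite /wt /Nplus /Nminus; congr (_ - _); apply: eq_bigl => y; rewrite inE.
  have hwu := hw u; move: (wt EH h u) hwu wu => w hwu wu.
  case: hwu => [hb|w0].
  + case: w hb wu => k /= hb wu.
    * have [x0 hx0] : exists x0, g x0 = (k - m)%N by apply: (surjg _ _ _ HG (conj gi gr)); lia.
      rewrite big_pred0; last by move=> y; apply/eqP; lia.
      rewrite (big_pred1 x0); last first.
        move=> y; rewrite /=; apply/idP/idP => [/eqP e|/eqP ->]; last by apply/eqP; lia.
        by apply/eqP; apply: gi; lia.
      lia.
    * have [x0 hx0] : exists x0, g x0 = (k.+1 - m)%N by apply: (surjg _ _ _ HG (conj gi gr)); lia.
      rewrite [X in _ - (X + _)]big_pred0; last by move=> y; apply/eqP; lia.
      rewrite (big_pred1 x0); last first.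
        move=> y; rewrite /=; apply/idP/idP => [/eqP e|/eqP ->]; last by apply/eqP; lia.
        by apply/eqP; apply: gi; lia.
      lia.
  + rewrite w0 [X in X + _ - _]big_pred0; last by move=> y; apply/eqP; have := gr y; lia.
    rewrite [X in _ - (X + _)]big_pred0; last by move=> y; apply/eqP; have := gr y; lia.
    rewrite w0 in wu; lia.
Qed.
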